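(* Let $N\ge 1$, let $s_1,\dots,s_N>0$ and $u_1,\dots,u_N>0$ with the nodes indexed so that $u_1\le u_2\le\dots\le u_N$, let $H_1,\dots,H_N\ge 0$ be integers and $\mathcal{E}>0$. For slot length $\sigma>0$ and transmit probability $\tau\in(0,1)$ define $p_s=\tau(1-\tau)^{N-1}$, $\bar t_i=(1-\tau)^N\sigma$, $\bar t_s=\sum_{k=1}^N p_s(s_k+\sigma)$, $$\bar t_c=\sum_{k=2}^N \tau(1-\tau)^{N-k}\sum_{l=1}^{k-1}\binom{k-1}{l}\tau^l(1-\tau)^{k-1-l}(u_k+\sigma),$$ and the CSMA throughput per node and bit-cost of node $k$ $$\mathsf{S}=\frac{p_s}{\bar t_s+\bar t_c+\bar t_i},\qquad \mathsf{B}_k=\Bigl(H_k+\frac{\tau}{p_s}\Bigr)u_k\mathcal{E}.$$ If $\tau=c\sqrt{\sigma}$ for a fixed constant $c>0$, then $$\lim_{\sigma\to 0}\mathsf{S}=\frac{1}{\sum_{k=1}^N s_k}\quad\text{and}\quad \lim_{\sigma\to 0}\mathsf{B}_k=(H_k+1)u_k\mathcal{E}\ \text{ for every } k.$$ That is, CSMA based CoopMAC and Direct Link asymptotically attain the throughput and bit-cost of the corresponding Round Robin schemes.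
   Context: Interpretation (for CSMA based Direct Link and CoopMAC with $N$ saturated nodes sending 1-bit packets to an access point, all at transmit power $\mathcal{E}$): $s_k$ is the travel time of a packet of node $k$ ($1/R_k$ for direct transmission at rate $R_k$, or $1/R_{kh_k}+1/R_{h_k}$ if $k$ transmits via a helper $h_k$), $u_k$ is the duration of node $k$'s own transmission ($1/R_k$ or $1/R_{kh_k}$), and $H_k$ is the number of nodes that node $k$ helps (all $H_k=0$ in Direct Link). The Round Robin values are throughput $1/\sum_k s_k$ per node and bit-cost $(H_k+1)u_k\mathcal{E}$; $\sigma$ is a slot length normalized by packet size, so $\sigma\to0$ corresponds to packet lengths tending to infinity. *)

(* Defs.v *)
From Stdlib Require Import Reals.
From Coquelicot Require Import Coquelicot.
Open Scope R_scope.

Fixpoint sum_range (m : nat) (len : nat) (f : nat -> R) : R :=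
  match len with
  | O => 0
  | S l => f m + sum_range (S m) l f
  end.
Definition sumk (a b : nat) (f : nat -> R) : R := sum_range a (S b - a) f.

Definition binomR (n k : nat) : R := Binomial.C n k.

(* Quantities of the CSMA model; nodes indexed 1..N. *)
Definition p_s (N : nat) (tau : R) : R := tau * (1 - tau) ^ (N - 1).
Definition t_i (N : nat) (tau sigma : R) : R := (1 - tau) ^ N * sigma.
Definition t_s (N : nat) (s : nat -> R) (tau sigma : R) : R :=
  sumk 1 N (fun k => p_s N tau * (s k + sigma)).
Definition t_c (N : nat) (u : nat -> R) (tau sigma : R) : R :=
  sumk 2 N (fun k => tau * (1 - tau) ^ (N - k) *
     sumk 1 (k - 1) (fun l => binomR (k - 1) l * tau ^ l * (1 - tau) ^ (k - 1 - l)
                                * (u k + sigma))).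
Definition throughput (N : nat) (s u : nat -> R) (tau sigma : R) : R :=
  p_s N tau / (t_s N s tau sigma + t_c N u tau sigma + t_i N tau sigma).
Definition bitcost (N : nat) (H : nat -> nat) (u : nat -> R) (E tau : R) (k : nat) : R :=
  (INR (H k) + tau / p_s N tau) * u k * E.

(* Main.v *)
Require Import Defs.
From Stdlib Require Import Reals Lra Lia.
From Coquelicot Require Import Coquelicot.
Open Scope R_scope.

Section Lims.
Variable F : (R -> Prop) -> Prop.
Context {FF : Filter F}.

Lemma L_plus (f g : R -> R) a b : filterlim f F (locally a) -> filterlim g F (locally b) ->
  filterlim (fun x => f x + g x) F (locally (a + b)).
Proof. intros H1 H2. exact (filterlim_comp_2 f g Rplus H1 H2 (@filterlim_plus _ R_NormedModule a b)). Qed.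

Lemma L_mult (f g : R -> R) a b : filterlim f F (locally a) -> filterlim g F (locally b) ->
  filterlim (fun x => f x * g x) F (locally (a * b)).
Proof. intros H1 H2. exact (filterlim_comp_2 f g Rmult H1 H2 (@filterlim_mult R_AbsRing a b)). Qed.

Lemma L_const (a : R) : filterlim (fun _ : R => a) F (@locally R_UniformSpace a).
Proof. apply filterlim_const. Qed.

Lemma L_minus (f g : R -> R) a b : filterlim f F (locally a) -> filterlim g F (locally b) ->
  filterlim (fun x => f x - g x) F (locally (a - b)).
Proof. intros H1 H2. unfold Rminus. apply L_plus; auto.
  replace (- b) with (-1 * b) by ring.
  apply (filterlim_ext (fun x => -1 * g x)). intros; ring.
  apply L_mult; auto. apply L_const. Qed.

Lemma L_inv (g : R -> R) b : b <> 0 -> filterlim g F (locally b) ->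
  filterlim (fun x => / g x) F (locally (/ b)).
Proof. intros Hb H. exact (filterlim_comp _ _ _ g Rinv _ _ _ H (continuous_Rinv b Hb)). Qed.

Lemma L_pow (f : R -> R) a n : filterlim f F (locally a) ->
  filterlim (fun x => f x ^ n) F (locally (a ^ n)).
Proof. intros H. induction n as [|n IH]; simpl. apply L_const. apply L_mult; auto. Qed.

Lemma L_sum (f : nat -> R -> R) (l : nat -> R) m n :
  (forall k, filterlim (f k) F (locally (l k))) ->
  filterlim (fun x => sum_range m n (fun k => f k x)) F (locally (sum_range m n l)).
Proof. intros H. revert m. induction n as [|n IH]; intros m; simpl.
  apply L_const. apply L_plus; auto. Qed.
End Lims.
Arguments L_plus {F FF} f g a b _ _.
Arguments L_mult {F FF} f g a b _ _.
Arguments L_minus {F FF} f g a b _ _.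
Arguments L_const {F FF} a.
Arguments L_inv {F} g b _ _.
Arguments L_pow {F FF} f a n _.
Arguments L_sum {F FF} f l m n _.

Lemma sum_range_ext m n f g : (forall k, f k = g k) -> sum_range m n f = sum_range m n g.
Proof. intros H. revert m. induction n; intros m; simpl; auto. rewrite H, IHn. auto. Qed.

Lemma sum_range_scal m n a f : sum_range m n (fun k => a * f k) = a * sum_range m n f.
Proof. revert m. induction n; intros m; simpl. ring. rewrite IHn. ring. Qed.

Lemma sum_range_zero m n f : (forall k, (m <= k)%nat -> f k = 0) -> sum_range m n f = 0.
Proof. revert m. induction n; intros m H; simpl. auto. rewrite H by lia.
  rewrite IHn. ring. intros; apply H; lia. Qed.

Lemma le_right : filter_le (at_right 0) (locally 0).
Proof. intros P HP. unfold at_right, within. apply filter_imp with P; auto. Qed.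

Lemma lim_sqrt : filterlim sqrt (at_right 0) (locally 0).
Proof. eapply filterlim_filter_le_1. apply le_right.
  pose proof (continuous_sqrt 0) as H. unfold continuous in H. rewrite sqrt_0 in H. exact H. Qed.

Lemma lim_id : filterlim (fun x => x) (at_right 0) (locally 0).
Proof. eapply filterlim_filter_le_1. apply le_right. apply filterlim_id. Qed.

Lemma pos_right : at_right 0 (fun x => 0 < x).
Proof. unfold at_right, within. apply filter_forall. auto. Qed.

Theorem proposition2 (N : nat) (s u : nat -> R) (H : nat -> nat) (E c : R) :
  (1 <= N)%nat ->
  (forall k, (1 <= k <= N)%nat -> 0 < s k) ->
  (forall k, (1 <= k <= N)%nat -> 0 < u k) ->
  (forall k l, (1 <= k)%nat -> (k <= l)%nat -> (l <= N)%nat -> u k <= u l) ->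
  0 < E -> 0 < c ->
  filterlim (fun sigma => throughput N s u (c * sqrt sigma) sigma)
    (at_right 0) (locally (1 / sumk 1 N s)) /\
  (forall k, (1 <= k <= N)%nat ->
    filterlim (fun sigma => bitcost N H u E (c * sqrt sigma) k)
      (at_right 0) (locally ((INR (H k) + 1) * u k * E))).
Proof.
  intros HN Hs Hu Hmono HE Hc.
  set (tau := fun x => c * sqrt x).
  assert (Ht : filterlim tau (at_right 0) (locally 0)).
  { replace 0 with (c * 0) at 2 by ring. apply L_mult. apply L_const. apply lim_sqrt. }
  assert (H1t : forall n, filterlim (fun x => (1 - tau x) ^ n) (at_right 0) (locally 1)).
  { intros n. replace (@locally R_UniformSpace 1) with (@locally R_UniformSpace ((1-0)^n))
      by (rewrite Rminus_0_r, pow1; auto).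
    apply L_pow, L_minus; [apply L_const | exact Ht]. }
  split.
  - set (inner := fun k x => sumk 1 (k - 1) (fun l => binomR (k - 1) l * tau x ^ l *
         (1 - tau x) ^ (k - 1 - l) * (u k + x))).
    set (A := fun x => (1 - tau x) ^ (N - 1)).
    set (B := fun x => sumk 1 N (fun k => (1 - tau x) ^ (N - 1) * (s k + x))).
    set (C := fun x => sumk 2 N (fun k => (1 - tau x) ^ (N - k) * inner k x)).
    set (D := fun x => (1 - tau x) ^ N * sqrt x / c).
    apply (filterlim_ext_loc (fun x => A x * / (B x + C x + D x))).
    { apply filter_imp with (2 := pos_right). intros x Hx.
      assert (Htx : tau x <> 0).
      { unfold tau. apply Rgt_not_eq. apply Rmult_lt_0_compat; auto. apply sqrt_lt_R0; auto. }
      unfold throughput.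
      assert (E1 : p_s N (c * sqrt x) = tau x * A x) by reflexivity.
      assert (E2 : t_s N s (c * sqrt x) x = tau x * B x).
      { unfold t_s, B, sumk. rewrite <- sum_range_scal. apply sum_range_ext. intros k.
        unfold p_s. fold (tau x). ring. }
      assert (E3 : t_c N u (c * sqrt x) x = tau x * C x).
      { unfold t_c, C, sumk. rewrite <- sum_range_scal. apply sum_range_ext. intros k.
        unfold inner, sumk. fold (tau x). ring. }
      assert (E4 : t_i N (c * sqrt x) x = tau x * D x).
      { unfold t_i, D, tau.
        transitivity ((1 - c * sqrt x) ^ N * (sqrt x * sqrt x)).
        rewrite sqrt_sqrt; lra. field. lra. }
      rewrite E1, E2, E3, E4.
      replace (tau x * B x + tau x * C x + tau x * D x) with (tau x * (B x + C x + D x)) by ring.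
      unfold Rdiv. rewrite Rinv_mult.
      transitivity (A x * / (B x + C x + D x) * (tau x * / tau x)).
      2: ring. rewrite Rinv_r; auto. ring. }
    assert (HB : filterlim B (at_right 0) (locally (sumk 1 N s))).
    { unfold B, sumk.
      replace (sum_range 1 (S N - 1) s) with
        (sum_range 1 (S N - 1) (fun k => 1 * (s k + 0))).
      apply L_sum. intros k. apply L_mult. apply H1t. apply L_plus. apply L_const. apply lim_id.
      apply sum_range_ext. intros; ring. }
    assert (HC : filterlim C (at_right 0) (locally 0)).
    { unfold C, sumk.
      replace (@locally R_UniformSpace 0) with (@locally R_UniformSpace (sum_range 2 (S N - 2) (fun k => 1 * 0))).
      apply L_sum. intros k. apply L_mult. apply H1t.
      unfold inner, sumk.
      replace (@locally R_UniformSpace 0) with (@locally R_UniformSpace (sum_range 1 (S (k - 1) - 1)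
        (fun l => binomR (k - 1) l * 0 ^ l * 1 * (u k + 0)))).
      apply L_sum. intros l. apply L_mult. apply L_mult. apply L_mult. apply L_const.
      apply L_pow, Ht. apply H1t. apply L_plus. apply L_const. apply lim_id.
      f_equal. apply sum_range_zero. intros l Hl. rewrite pow_i by lia. ring.
      f_equal. apply sum_range_zero. intros; ring. }
    assert (HD : filterlim D (at_right 0) (locally 0)).
    { unfold D. replace (@locally R_UniformSpace 0) with (@locally R_UniformSpace (1 * 0 * / c)) by (f_equal; ring). unfold Rdiv.
      apply L_mult. apply L_mult. apply H1t. apply lim_sqrt. apply L_const. }
    assert (Hpos : 0 < sumk 1 N s).
    { unfold sumk. destruct N as [|N']. lia.
      replace (S (S N') - 1)%nat with (S N') by lia. simpl.
      assert (0 <= sum_range 2 N' s).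
      { assert (G : forall m n, (1 <= m)%nat -> (m + n <= S (S N'))%nat -> 0 <= sum_range m n s).
        { intros m n. revert m. induction n; intros m Hm Hmn; simpl. lra.
          pose proof (Hs m ltac:(lia)). pose proof (IHn (S m) ltac:(lia) ltac:(lia)). lra. }
        apply G; lia. }
      pose proof (Hs 1%nat ltac:(lia)). lra. }
    replace (1 / sumk 1 N s) with (1 * / (sumk 1 N s + 0 + 0)) by (unfold Rdiv; f_equal; f_equal; ring).
    apply L_mult. apply H1t. apply L_inv. lra.
    apply L_plus. apply L_plus. exact HB. exact HC. exact HD.
  - intros k Hk. unfold bitcost.
    apply (filterlim_ext_loc (fun x => (INR (H k) + / (1 - tau x) ^ (N - 1)) * u k * E)).
    { apply filter_imp with (2 := pos_right). intros x Hx.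
      assert (Htx : tau x <> 0).
      { unfold tau. apply Rgt_not_eq. apply Rmult_lt_0_compat; auto. apply sqrt_lt_R0; auto. }
      unfold p_s. fold (tau x). f_equal. f_equal. unfold Rdiv. rewrite Rinv_mult.
      f_equal. transitivity (/ (1 - tau x) ^ (N - 1) * (tau x * / tau x)). rewrite Rinv_r; auto. ring.
      ring. }
    apply L_mult. apply L_mult. 2, 3: apply L_const.
    replace (@locally R_UniformSpace (INR (H k) + 1)) with (@locally R_UniformSpace (INR (H k) + / 1)) by (rewrite Rinv_1; auto).
    apply L_plus. apply L_const. apply L_inv. lra. apply H1t.
Qed.
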